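(* Let $G$ be a finite abelian group and let $k \in \mathbb{N}$. (1) Let $B$ be a zero-sum sequence over $G$ with $\max\mathsf{L}(B)=k+1$ and let $U$ be a minimal zero-sum sequence over $G$ with $U \mid B$. Then $\max\mathsf{L}(U^{-1}B)\le k$. Moreover, $\max\mathsf{L}(U^{-1}B) = k$ if and only if there exists some factorization $\zeta$ of $B$ of length $k+1$ in which $U$ occurs as a factor. (2) Let $M$ be the minimum of $|U|$ over all minimal zero-sum sequences $U$ that divide some zero-sum sequence $B$ over $G$ with $\max\mathsf{L}(B)=k+1$ and $|B|=\mathsf{D}_{k+1}(G)$. Then $\mathsf{D}_{k+1}(G)\le \mathsf{D}_k(G) + M$. (3) For each $\ell \in \mathbb{N}$, $\mathsf{D}_{k+1}(G) \le \max \{\mathsf{D}_k(G) + \ell, \mathsf{s}_{\le \ell}(G)-1\}$. In particular, if $\mathsf{D}_k(G) \ge \eta(G) - 1 -\exp(G)$, then $\mathsf{D}_{k+1}(G)\le \mathsf{D}_k(G) +\exp(G)$.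
   Context: $G$ is written additively. A sequence over $G$ is an element of the free abelian monoid over $G$ (a finite unordered list of elements with repetitions); $|S|$ denotes its length; $T\mid S$ means $T$ is a subsequence, and then $T^{-1}S$ is the sequence of remaining terms. A zero-sum sequence has terms summing to $0$; a minimal zero-sum sequence is a non-empty zero-sum sequence with no proper non-empty zero-sum subsequence. A factorization of a zero-sum sequence $B$ is a formal unordered product of minimal zero-sum sequences whose product is $B$; its length is the number of factors; $\mathsf{L}(B)$ is the set of lengths of factorizations of $B$. $\mathsf{D}_k(G)$ is the smallest $\ell$ such that every sequence of length at least $\ell$ has $k$ disjoint non-empty zero-sum subsequences (equivalently, the maximal length of a zero-sum sequence $B$ with $\max\mathsf{L}(B)\le k$). For $\ell\in\mathbb{N}$, $\mathsf{s}_{\le \ell}(G)\in\mathbb{N}\cup\{\infty\}$ is the smallest $n$ such that every sequence over $G$ of length at least $n$ has a non-empty zero-sum subsequence of length at most $\ell$; $\eta(G)=\mathsf{s}_{\le\exp(G)}(G)$. *)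

(* Defs.v *)
(* Sequences over a finite abelian group G (finZmodType)
   are represented by lists seq G, considered up to permutation
   (elements of the free abelian monoid over G). *)
From mathcomp Require Import all_boot all_algebra all_fingroup all_solvable.
Set Implicit Arguments. Unset Strict Implicit. Unset Printing Implicit Defensive.
Import GRing.Theory.
Local Open Scope ring_scope.

Section Seqs.
Variable G : finZmodType.
Implicit Types S T U B C : seq G.

Definition seq_dvd T S : bool := [forall x : G, (count_mem x T <= count_mem x S)%N].

Definition seq_quot T S : seq G := foldr (fun x s => rem x s) S T.

Definition zero_sum S : bool := \sum_(x <- S) x == 0.

Definition minimal_zero_sum U : Prop :=
  [/\ (0 < size U)%N, zero_sum U &
      forall T, seq_dvd T U -> (0 < size T)%N -> zero_sum T -> size T = size U].

Definition factorization B (Z : seq (seq G)) : Prop :=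
  (forall V, V \in Z -> minimal_zero_sum V) /\ perm_eq (flatten Z) B.

Definition maxL_le B (k : nat) : Prop :=
  forall Z, factorization B Z -> (size Z <= k)%N.

Definition maxL_eq B (k : nat) : Prop :=
  (exists Z, factorization B Z /\ size Z = k) /\ maxL_le B k.

Definition has_disjoint_zs (k : nat) S : Prop :=
  exists Ts : seq (seq G), [/\ size Ts = k,
    forall T, T \in Ts -> (0 < size T)%N /\ zero_sum T &
    seq_dvd (flatten Ts) S].

Definition Dk_prop (k l : nat) : Prop :=
  forall S, (l <= size S)%N -> has_disjoint_zs k S.

Definition is_Dk (k n : nat) : Prop :=
  Dk_prop k n /\ forall l, Dk_prop k l -> (n <= l)%N.

Definition s_le_prop (l n : nat) : Prop :=
  forall S, (n <= size S)%N ->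
    exists T, [/\ seq_dvd T S, (0 < size T)%N, (size T <= l)%N & zero_sum T].

(* n = s_{<= l}(G) (a natural number; if s_{<= l}(G) = infinity, no n satisfies this) *)
Definition is_s_le (l n : nat) : Prop :=
  s_le_prop l n /\ forall m, s_le_prop l m -> (n <= m)%N.

Definition is_min_atom_len (j d M : nat) : Prop :=
  (exists B U, [/\ zero_sum B, maxL_eq B j, size B = d, minimal_zero_sum U &
                   seq_dvd U B /\ size U = M]) /\
  (forall B U, zero_sum B -> maxL_eq B j -> size B = d -> minimal_zero_sum U ->
     seq_dvd U B -> (M <= size U)%N).

End Seqs.

Definition expG (G : finZmodType) : nat := exponent [set: G].

(* Main.v *)
Require Import Defs.
From mathcomp Require Import all_boot all_algebra all_fingroup all_solvable.
From mathcomp Require Import zify.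
From Stdlib Require Import Classical.
Set Implicit Arguments. Unset Strict Implicit. Unset Printing Implicit Defensive.
Import GRing.Theory.
Local Open Scope ring_scope.

Section Tools.
Variable G : finZmodType.
Implicit Types S T U B C R W : seq G.

Lemma cnt_perm S1 S2 : (forall x, count_mem x S1 = count_mem x S2) -> perm_eq S1 S2.
Proof. by move=> H; apply/allP => x _; apply/eqP. Qed.

Lemma perm_cnt S1 S2 x : perm_eq S1 S2 -> count_mem x S1 = count_mem x S2.
Proof. by move/seq.permP. Qed.

Lemma dvdP T S : reflect (forall x, count_mem x T <= count_mem x S)%N (seq_dvd T S).
Proof. exact: forallP. Qed.

Lemma dvd_quot T S : seq_dvd T S -> perm_eq (T ++ seq_quot T S) S.
Proof.
elim: T => [|x T IH] /dvdP H /=; first by [].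
have HT : seq_dvd T S.
  apply/dvdP => y; have := H y; rewrite /= ; lia.
have P := IH HT.
have xq : x \in seq_quot T S.
  rewrite -has_pred1 has_count; have := H x; have := perm_cnt x P.
  rewrite /= count_cat eqxx; lia.
apply: cnt_perm => y.
rewrite -(perm_cnt y P) /= !count_cat (perm_cnt y (perm_to_rem xq)) /=; lia.
Qed.

Lemma perm_dvd T S R : perm_eq S (T ++ R) -> seq_dvd T S.
Proof. move=> P; apply/dvdP => x; rewrite (perm_cnt x P) count_cat; lia. Qed.

Lemma dvd_trans T S R : seq_dvd T S -> seq_dvd S R -> seq_dvd T R.
Proof. move=> /dvdP H1 /dvdP H2; apply/dvdP => x; exact: leq_trans (H1 x) (H2 x). Qed.

Lemma dvd_size T S : seq_dvd T S -> (size T <= size S)%N.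
Proof. move=> /dvd_quot /perm_size; rewrite size_cat => <-; exact: leq_addr. Qed.

Lemma sum_perm S1 S2 : perm_eq S1 S2 -> \sum_(x <- S1) x = \sum_(x <- S2) x.
Proof. exact: perm_big. Qed.

Lemma zs_perm S1 S2 : perm_eq S1 S2 -> zero_sum S1 = zero_sum S2.
Proof. by move=> P; rewrite /zero_sum (sum_perm P). Qed.

Lemma sum_cat S1 S2 : \sum_(x <- S1 ++ S2) x = \sum_(x <- S1) x + \sum_(x <- S2) x.
Proof. exact: big_cat. Qed.

Lemma zs_cat S1 S2 : zero_sum S1 -> zero_sum S2 -> zero_sum (S1 ++ S2).
Proof. by rewrite /zero_sum sum_cat => /eqP -> /eqP ->; rewrite addr0. Qed.

Lemma zs_quot T S : seq_dvd T S -> zero_sum T -> zero_sum S -> zero_sum (seq_quot T S).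
Proof.
move=> /dvd_quot P; rewrite /zero_sum -(sum_perm P) sum_cat => /eqP ->.
by rewrite add0r.
Qed.

Lemma minimal_perm U V : perm_eq U V -> minimal_zero_sum U -> minimal_zero_sum V.
Proof.
move=> P [h1 h2 h3]; split; first by rewrite -(perm_size P).
  by rewrite -(zs_perm P).
move=> T /dvdP HT h4 h5; rewrite -(perm_size P); apply: h3 => //.
by apply/dvdP => x; rewrite (perm_cnt x P).
Qed.

Lemma factor_exists S : zero_sum S -> exists Z, factorization S Z.
Proof.
have [n] := ubnP (size S); elim: n S => // n IH S Hn zS.
case: (ltnP 0 (size S)) => hS; last first.
  by exists [::]; split => //; move: hS; rewrite leqn0 => /nilP ->.
case: (classic (minimal_zero_sum S)) => hm.
  by exists [:: S]; split => [V|]; rewrite /= ?inE ?cats0 // => /eqP ->.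
have : ~ (forall T, seq_dvd T S -> (0 < size T)%N -> zero_sum T -> size T = size S).
  by move=> h; apply: hm; split.
move=> /not_all_ex_not [T] H1; have [dT H2] := imply_to_and _ _ H1; have [pT H3] := imply_to_and _ _ H2; have [zT nT] := imply_to_and _ _ H3.
have lT : (size T < size S)%N by have := dvd_size dT; lia.
have P := dvd_quot dT.
have lQ : (size (seq_quot T S) < size S)%N.
  have Hs := perm_size P; rewrite size_cat in Hs; rewrite -Hs -{1}(add0n (size (seq_quot T S))) ltn_add2r //.

have [Z1 [h1 p1]] := IH T ltac:(lia) zT.
have [Z2 [h2 p2]] := IH (seq_quot T S) ltac:(lia) (zs_quot dT zT zS).
exists (Z1 ++ Z2); split.
  by move=> V; rewrite mem_cat => /orP [] ?; [apply: h1|apply: h2].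
rewrite flatten_cat; apply: perm_trans P; exact: perm_cat.
Qed.

Lemma fact_pos T Z : (0 < size T)%N -> factorization T Z -> (0 < size Z)%N.
Proof.
move=> hT [_ P]; case: Z P => // /perm_size; move: hT; rewrite /=; case: T => //.
Qed.

Lemma zs_flatten (Ts : seq (seq G)) :
  (forall T, T \in Ts -> (0 < size T)%N /\ zero_sum T) -> zero_sum (flatten Ts).
Proof.
elim: Ts => [|T Ts IH] H; first by rewrite /zero_sum big_nil.
rewrite /=; apply: zs_cat; first by case: (H T (mem_head _ _)).
by apply: IH => V hV; apply: H; rewrite inE hV orbT.
Qed.

Lemma fact_flatten (Ts : seq (seq G)) :
  (forall T, T \in Ts -> (0 < size T)%N /\ zero_sum T) ->
  exists Z, factorization (flatten Ts) Z /\ (size Ts <= size Z)%N.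
Proof.
elim: Ts => [|T Ts IH] H; first by exists [::]; split.
have [pT zT] := H T (mem_head _ _).
have [Z1 F1] := factor_exists zT.
have [Z2 [[h2 p2] s2]] : exists Z, factorization (flatten Ts) Z /\ (size Ts <= size Z)%N.
  by apply: IH => V hV; apply: H; rewrite inE hV orbT.
have := fact_pos pT F1; case: F1 => h1 p1 s1.
exists (Z1 ++ Z2); split; last by rewrite size_cat /=; lia.
split; first by move=> V; rewrite mem_cat => /orP [] ?; [apply: h1|apply: h2].
by rewrite flatten_cat /=; apply: perm_cat.
Qed.

Lemma fact_disjoint m B : zero_sum B -> has_disjoint_zs m B ->
  exists Z, factorization B Z /\ (m <= size Z)%N.
Proof.
move=> zB [Ts [sTs hTs dTs]].
have [Z1 [[h1 p1] s1]] := fact_flatten hTs.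
have zW := zs_quot dTs (zs_flatten hTs) zB.
have [Z2 [h2 p2]] := factor_exists zW.
exists (Z1 ++ Z2); split; last by rewrite size_cat; lia.
split; first by move=> V; rewrite mem_cat => /orP [] ?; [apply: h1|apply: h2].
rewrite flatten_cat; apply: perm_trans (dvd_quot dTs); exact: perm_cat.
Qed.

Lemma lemA k dk B : Dk_prop G k dk -> zero_sum B -> (dk < size B)%N ->
  has_disjoint_zs k.+1 B.
Proof.
move=> hD zB; case: B zB => [|g B'] //= zB hs.
have [Ts [sTs hTs dTs]] := hD B' ltac:(lia).
set W := seq_quot (flatten Ts) B'.
have P := dvd_quot dTs.
have zgW : zero_sum (g :: W).
  move: zB; rewrite /zero_sum !big_cons -(sum_perm P) sum_cat.
  by move/eqP: (zs_flatten hTs) => ->; rewrite add0r.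
exists ((g :: W) :: Ts); split => /=; first by rewrite sTs.
  by move=> T; rewrite inE => /orP [/eqP ->|/hTs].
apply: (@perm_dvd _ _ [::]); rewrite cats0 /= perm_cons perm_sym perm_catC; exact: P.
Qed.

Lemma dvd_quot_r T S : seq_dvd T S -> seq_dvd (seq_quot T S) S.
Proof. move=> /dvd_quot P; apply: (@perm_dvd _ _ T); by rewrite perm_sym perm_catC. Qed.

Lemma lift_disj m R S : has_disjoint_zs m R -> seq_dvd R S -> has_disjoint_zs m S.
Proof. by move=> [Ts [h1 h2 h3]] d; exists Ts; split => //; apply: dvd_trans d. Qed.

Lemma step1 k dk T S : Dk_prop G k dk -> seq_dvd T S -> (0 < size T)%N ->
  zero_sum T -> (dk + size T <= size S)%N -> has_disjoint_zs k.+1 S.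
Proof.
move=> hD dT pT zT hs.
have P := dvd_quot dT.
have sQ : (dk <= size (seq_quot T S))%N.
  by have Hs := perm_size P; rewrite size_cat in Hs; rewrite -Hs [(dk + _)%N]addnC leq_add2l in hs.
have [Ts [sTs hTs dTs]] := hD _ sQ.
exists (T :: Ts); split => /=; first by rewrite sTs.
  by move=> V; rewrite inE => /orP [/eqP ->|/hTs].
apply/dvdP => x; rewrite -(perm_cnt x P) !count_cat leq_add2l.
by move/dvdP: dTs.
Qed.

Lemma lemC k dk l s : Dk_prop G k dk -> s_le_prop G l s -> (1 <= l)%N ->
  Dk_prop G k.+1 (maxn (dk + l) s.-1).
Proof.
move=> hD hs hl S; rewrite geq_max => /andP [h1 h2].
case: (leqP s (size S)) => h3.
  have [T [dT pT lT zT]] := hs S h3.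
  by apply: (step1 hD dT pT zT); lia.
pose g := - \sum_(x <- S) x.
have [T [dT pT lT zT]] := hs (g :: S) ltac:(rewrite /=; lia).
case: (boolP (seq_dvd T S)) => dTS.
  by apply: (step1 hD dTS pT zT); lia.
have gT : g \in T.
  apply/negPn/negP => gT; move/negP: dTS; apply; apply/dvdP => x.
  move/dvdP: dT => /(_ x) /=; case: (eqVneq g x) => [<-|_]; last by rewrite add0n.
  by rewrite (count_memPn gT).
have PT := perm_to_rem gT.
set T' := rem g T in PT.
have dT' : seq_dvd T' S.
  apply/dvdP => x; move/dvdP: dT => /(_ x); rewrite (perm_cnt x PT) /=; lia.
have PS := dvd_quot dT'.
set R := seq_quot T' S in PS.
have zR : zero_sum R.
  move: zT; rewrite /zero_sum (sum_perm PT) big_cons /g.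
  rewrite -(sum_perm PS) sum_cat => /eqP H; apply/eqP.
  by move: H; rewrite opprD addrAC addNr add0r => /eqP; rewrite oppr_eq0 => /eqP.
have sR : (dk < size R)%N.
  have e1 : size T = (size (T' : seq G)).+1 by rewrite (perm_size PT).
  have e2 : (size (T' : seq G) + size R = size S)%N by rewrite -size_cat (perm_size PS).
  lia.
by apply: lift_disj (lemA hD zR sR) _; apply: dvd_quot_r.
Qed.

Lemma part1_le k B U : maxL_le B k.+1 -> minimal_zero_sum U -> seq_dvd U B ->
  maxL_le (seq_quot U B) k.
Proof.
move=> hB hU dU Z [hZ pZ].
have : factorization B (U :: Z).
  split; first by move=> V; rewrite inE => /orP [/eqP ->|/hZ].
  rewrite /=; apply: perm_trans (dvd_quot dU); by rewrite perm_cat2l.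
by move/hB.
Qed.

Lemma part1 k B U : maxL_eq B k.+1 -> minimal_zero_sum U -> seq_dvd U B ->
  maxL_le (seq_quot U B) k /\
     (maxL_eq (seq_quot U B) k <->
        exists Z, [/\ factorization B Z, size Z = k.+1 & has (perm_eq U) Z]).
Proof.
move=> [_ hB] hU dU; have hle := part1_le hB hU dU; split => //; split.
  move=> [[Z [[hZ pZ] sZ]] _]; exists (U :: Z); split => /=.
  - split; first by move=> V; rewrite inE => /orP [/eqP ->|/hZ].
    apply: perm_trans (dvd_quot dU); by rewrite perm_cat2l.
  - by rewrite sZ.
  - by rewrite perm_refl.
move=> [Z [[hZ pZ] sZ /hasP [V VZ UV]]]; split => //.
have PZ := perm_to_rem VZ.
exists (rem V Z); split; last by rewrite size_rem // sZ.
split; first by move=> W /mem_rem /hZ.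
have P2 : perm_eq (flatten (V :: rem V Z)) B.
  by apply: perm_trans pZ; rewrite perm_sym; exact: perm_flatten PZ.
apply: cnt_perm => x; have := perm_cnt x P2; have := perm_cnt x (dvd_quot dU).
have := perm_cnt x UV; rewrite /= !count_cat; lia.
Qed.

Lemma part2 k dk dk1 M : is_Dk G k dk -> is_min_atom_len G k.+1 dk1 M ->
  (dk1 <= dk + M)%N.
Proof.
move=> [hD _] [[B [U [zB hB sB hU [dU sU]]]] _].
have hle := part1_le hB.2 hU dU.
have zQ : zero_sum (seq_quot U B) by case: hU => _ zU _; exact: zs_quot.
have sQ : (size (seq_quot U B) <= dk)%N.
  rewrite leqNgt; apply/negP => lt.
  have [Z [FZ sZ]] := fact_disjoint zQ (lemA hD zQ lt).
  by have := hle _ FZ; lia.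
have e : (size U + size (seq_quot U B) = size B)%N.
  by rewrite -size_cat (perm_size (dvd_quot dU)).
lia.
Qed.
End Tools.

Theorem proposition3p1 (G : finZmodType) (k : nat) (hk : (1 <= k)%N) :
  (* (1) *)
  (forall B U : seq G, zero_sum B -> maxL_eq B k.+1 -> minimal_zero_sum U ->
     seq_dvd U B ->
     maxL_le (seq_quot U B) k /\
     (maxL_eq (seq_quot U B) k <->
        exists Z, [/\ factorization B Z, size Z = k.+1 & has (perm_eq U) Z]))
  /\
  (* (2) *)
  (forall dk dk1 M : nat, is_Dk G k dk -> is_Dk G k.+1 dk1 ->
     is_min_atom_len G k.+1 dk1 M -> (dk1 <= dk + M)%N)
  /\
  (* (3) *)
  (forall dk dk1 : nat, is_Dk G k dk -> is_Dk G k.+1 dk1 ->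
     (forall l s : nat, (1 <= l)%N -> is_s_le G l s -> (dk1 <= maxn (dk + l) s.-1)%N)
     /\
     (forall eta : nat, is_s_le G (expG G) eta -> (eta <= dk + 1 + expG G)%N ->
        (dk1 <= dk + expG G)%N)).
Proof.
split; first by move=> B U _ hB hU dU; exact: part1.
split; first by move=> dk dk1 M hD _ hM; exact: part2 hD hM.
move=> dk dk1 [hD _] [_ hmin].
have H3 : forall l s : nat, (1 <= l)%N -> is_s_le G l s -> (dk1 <= maxn (dk + l) s.-1)%N.
  by move=> l s hl [hs _]; apply: hmin; exact: lemC hD hs hl.
split => // eta heta hle.
have he : (1 <= expG G)%N by rewrite /expG exponent_gt0.
move: (H3 _ _ he heta) => /leq_trans; apply; rewrite geq_max leqnn /=; lia.
Qed.
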